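(* The operator norm $\|\cdot\|_\infty$ is the maximum element of the class of $M$-norms $\||\cdot\||$ on $\mathbb{M}_n$ satisfying $\||A\||\le\omega_*(A)$ for all $A\in\mathbb{M}_n$.
   Context: $\mathbb{M}_n$ is the algebra of complex $n\times n$ matrices with identity $I$; $\|\cdot\|_\infty$ is the operator norm, $\omega(A)=\sup\{|\langle x,Ax\rangle|:\|x\|=1\}$ the numerical radius, and $\omega_*(Y)=\sup\{|\mathrm{Tr}(Y^*X)|:\omega(X)\le1\}$ its dual norm. A norm $\||\cdot\||$ on $\mathbb{M}_n$ is an $M$-norm if $\left\||\sum_{i=1}^k C_i^*X_iC_i\right\||\le \max_{i}\||X_i\||$ for all $k$, all $X_i$ and all $C_i$ with $\sum_{i=1}^k C_i^*C_i=I$. *)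

(* Defs.v *)
From HB Require Import structures.
From mathcomp Require Import all_boot all_order all_algebra.
From mathcomp Require Import complex.
From mathcomp Require Import classical_sets reals.
Set Implicit Arguments. Unset Strict Implicit. Unset Printing Implicit Defensive.
Import Order.TTheory GRing.Theory Num.Theory.
Local Open Scope ring_scope.
Local Open Scope classical_set_scope.

Section Defs.
Variable R : realType.
Local Notation C := R[i].

Definition cmod (z : C) : R := Num.sqrt (complex.Re z ^+ 2 + complex.Im z ^+ 2).

Definition adjmx m n (A : 'M[C]_(m, n)) : 'M[C]_(n, m) :=
  (map_mx (@conjc R) A)^T.

Definition vnorm n (x : 'cV[C]_n) : R := Num.sqrt (\sum_i cmod (x i 0) ^+ 2).

Definition quadform n (A : 'M[C]_n) (x : 'cV[C]_n) : C := (adjmx x *m A *m x) 0 0.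

Definition opnorm n (A : 'M[C]_n) : R :=
  sup [set r | exists x : 'cV[C]_n, vnorm x = 1 /\ r = vnorm (A *m x)].

Definition numrad n (A : 'M[C]_n) : R :=
  sup [set r | exists x : 'cV[C]_n, vnorm x = 1 /\ r = cmod (quadform A x)].

Definition numrad_dual n (Y : 'M[C]_n) : R :=
  sup [set r | exists X : 'M[C]_n, numrad X <= 1 /\ r = cmod (\tr (adjmx Y *m X))].

Definition is_norm n (N : 'M[C]_n -> R) : Prop :=
  [/\ (forall A, 0 <= N A),
      (forall A, N A = 0 -> A = 0),
      (forall (c : C) A, N (c *: A) = cmod c * N A) &
      (forall A B, N (A + B) <= N A + N B)].

Definition is_Mnorm n (N : 'M[C]_n -> R) : Prop :=
  is_norm N /\
  forall (k : nat) (X Cs : 'I_k -> 'M[C]_n),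
    \sum_(i < k) adjmx (Cs i) *m Cs i = 1%:M ->
    N (\sum_(i < k) adjmx (Cs i) *m X i *m Cs i) <= \big[Num.max/0]_(i < k) N (X i).

End Defs.

(* Main.v *)
Require Import Defs.
From HB Require Import structures.
From mathcomp Require Import all_boot all_order all_algebra.
From mathcomp Require Import complex.
From mathcomp Require Import classical_sets reals boolp ring lra.
Import Order.TTheory GRing.Theory Num.Theory Num.Def.
Set Implicit Arguments. Unset Strict Implicit. Unset Printing Implicit Defensive.
Local Open Scope ring_scope.

Section Aux.
Variable R : realType.
Local Notation C := R[i].
Local Notation "x %:C" := (real_complex R x) (format "x %:C").

Lemma cmodE (z : C) : (cmod z)%:C = `|z|.
Proof. by rewrite normc_def. Qed.

Lemma cmod_ge0 (z : C) : 0 <= cmod z.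
Proof. exact: sqrtr_ge0. Qed.

Lemma cmodM (a b : C) : cmod (a * b) = cmod a * cmod b.
Proof. by apply: complexI; rewrite rmorphM cmodE normrM -!cmodE. Qed.

Lemma cmodD (a b : C) : cmod (a + b) <= cmod a + cmod b.
Proof. by rewrite -lecR rmorphD /= !cmodE ler_normD. Qed.

Lemma cmod_conj (a : C) : cmod (conjC a) = cmod a.
Proof. by apply: complexI; rewrite !cmodE norm_conjC. Qed.

Lemma cmod0 : cmod (0 : C) = 0.
Proof. by apply: complexI; rewrite cmodE normr0. Qed.

Lemma cmodN (a : C) : cmod (- a) = cmod a.
Proof. by apply: complexI; rewrite !cmodE normrN. Qed.

Lemma cmodD_sum k (f : 'I_k -> C) : cmod (\sum_i f i) <= \sum_i cmod (f i).
Proof.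
elim/big_rec2: _ => [|i y1 y2 _ h]; first by rewrite cmod0.
by apply: le_trans (cmodD _ _) _; rewrite lerD2l.
Qed.

Lemma cmod_real (r : R) : cmod r%:C = `|r|.
Proof. by rewrite /cmod /= expr0n /= addr0 sqrtr_sqr. Qed.

Lemma cmod2 (a : C) : (cmod a ^+ 2)%:C = conjC a * a.
Proof. by rewrite rmorphXn /= cmodE normCKC. Qed.

Lemma cmod_eq0 (a : C) : (cmod a == 0) = (a == 0).
Proof. by rewrite -(inj_eq (@complexI R)) cmodE normr_eq0. Qed.

Lemma cmod1 : cmod (1 : C) = 1.
Proof. by apply: complexI; rewrite cmodE normr1. Qed.

Definition ip n (x y : 'cV[C]_n) : C := (adjmx x *m y) 0 0.

Lemma ipE n (x y : 'cV[C]_n) : ip x y = \sum_i conjC (x i 0) * y i 0.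
Proof. by rewrite /ip !mxE; apply: eq_bigr => i _; rewrite !mxE. Qed.

Lemma ip_dot n (x y : 'cV[C]_n) : ip x y = dotmx (y^T) (x^T).
Proof.
rewrite ipE dotmxE !mxE; apply: eq_bigr => i _; rewrite !mxE mulrC //.
Qed.

Lemma vnorm_ge0 n (x : 'cV[C]_n) : 0 <= vnorm x.
Proof. exact: sqrtr_ge0. Qed.

Lemma vnorm2 n (x : 'cV[C]_n) : vnorm x ^+ 2 = \sum_i cmod (x i 0) ^+ 2.
Proof. by rewrite sqr_sqrtr // sumr_ge0 // => i _; rewrite exprn_ge0 // cmod_ge0. Qed.

Lemma vnorm2C n (x : 'cV[C]_n) : (vnorm x ^+ 2)%:C = ip x x.
Proof. by rewrite vnorm2 rmorph_sum /= ipE; apply: eq_bigr => i _; rewrite cmod2. Qed.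

Lemma sqrt_dot n (x : 'cV[C]_n) : sqrtC (dotmx x^T x^T) = (vnorm x)%:C.
Proof. by rewrite -ip_dot -vnorm2C rmorphXn sqrCK // ler0c vnorm_ge0. Qed.

Lemma ip_CS n (x y : 'cV[C]_n) : cmod (ip x y) <= vnorm x * vnorm y.
Proof.
rewrite -lecR rmorphM /= cmodE ip_dot -!sqrt_dot mulrC.
exact: (CauchySchwarz_sqrt _ _ _).1.
Qed.

Lemma vnormD n (x y : 'cV[C]_n) : vnorm (x + y) <= vnorm x + vnorm y.
Proof.
rewrite -lecR rmorphD /= -!sqrt_dot linearD /=.
exact: (triangle_lerif _ _ _).1.
Qed.

Lemma vnormZ n (c : C) (x : 'cV[C]_n) : vnorm (c *: x) = cmod c * vnorm x.
Proof.
rewrite /vnorm.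
under eq_bigr => i _ do rewrite mxE cmodM exprMn.
rewrite -mulr_sumr sqrtrM ?exprn_ge0 ?cmod_ge0 // sqrtr_sqr ger0_norm //.
exact: cmod_ge0.
Qed.

Lemma vnorm_eq0 n (x : 'cV[C]_n) : vnorm x = 0 -> x = 0.
Proof.
move=> h; have : dotmx x^T x^T == 0.
  by rewrite -ip_dot -vnorm2C h expr0n /= rmorph0.
by rewrite dnorm_eq0 => /eqP/(congr1 trmx); rewrite trmxK trmx0.
Qed.

Lemma vnorm0 n : vnorm (0 : 'cV[C]_n) = 0.
Proof. by rewrite -(scale0r (0 : 'cV[C]_n)) vnormZ cmod0 mul0r. Qed.

Lemma vnormN n (x : 'cV[C]_n) : vnorm (- x) = vnorm x.
Proof. by rewrite -scaleN1r vnormZ cmodN cmod1 mul1r. Qed.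

Lemma cmod_le_vnorm n (x : 'cV[C]_n) i : cmod (x i 0) <= vnorm x.
Proof.
rewrite -(ger0_norm (cmod_ge0 _)) -sqrtr_sqr; apply: ler_wsqrtr.
rewrite (bigD1 i) //= lerDl sumr_ge0 // => j _.
by rewrite exprn_ge0 // cmod_ge0.
Qed.

Lemma vnorm_delta n (i : 'I_n) : vnorm (delta_mx i 0 : 'cV[C]_n) = 1.
Proof.
rewrite /vnorm (bigD1 i) //= big1 ?addr0.
  by rewrite mxE !eqxx cmod1 expr1n sqrtr1.
by move=> j ji; rewrite mxE (negbTE ji) cmod0 expr0n.
Qed.

Lemma vnorm_sum n k (f : 'I_k -> 'cV[C]_n) :
  vnorm (\sum_i f i) <= \sum_i vnorm (f i).
Proof.
elim/big_rec2: _ => [|i y1 y2 _ h]; first by rewrite vnorm0.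
by apply: le_trans (vnormD _ _) _; rewrite lerD2l.
Qed.


Section SupAux.
Local Open Scope classical_set_scope.
Lemma sup_le_gen (E : set R) c : 0 <= c -> (forall r, E r -> r <= c) -> sup E <= c.
Proof.
move=> c0 h; have [ne|e] := pselect (E !=set0).
  by apply: ge_sup => // r /h.
by move/nonemptyPn: e => ->; rewrite sup0.
Qed.

Lemma sup_ge_gen (E : set R) M r : (forall s, E s -> s <= M) -> E r -> r <= sup E.
Proof. by move=> hM Er; apply: ub_le_sup => //; exists M => s /hM. Qed.

Lemma sup_ge0_gen (E : set R) M : (forall s, E s -> s <= M) ->
  (forall s, E s -> 0 <= s) -> 0 <= sup E.
Proof.
move=> hM h0; have [[r Er]|e] := pselect (E !=set0).
  by apply: le_trans (h0 _ Er) (sup_ge_gen hM Er).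
by move/nonemptyPn: e => ->; rewrite sup0.
Qed.
End SupAux.

Lemma mulmx_col n (A : 'M[C]_n) (x : 'cV[C]_n) :
  A *m x = \sum_j x j 0 *: col j A.
Proof.
apply/matrixP => i k; rewrite ord1 !mxE summxE; apply: eq_bigr => j _.
by rewrite !mxE mulrC.
Qed.

Definition Kop n (A : 'M[C]_n) := \sum_j vnorm (col j A).

Lemma opnorm_bnd n (A : 'M[C]_n) x : vnorm x = 1 -> vnorm (A *m x) <= Kop A.
Proof.
move=> x1; rewrite mulmx_col; apply: le_trans (vnorm_sum _) _.
apply: ler_sum => j _; rewrite vnormZ ler_piMl ?vnorm_ge0 //.
by rewrite -x1 cmod_le_vnorm.
Qed.

Lemma opnorm_ub n (A : 'M[C]_n) x : vnorm x = 1 -> vnorm (A *m x) <= opnorm A.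
Proof.
move=> x1; apply: (@sup_ge_gen _ (Kop A)); last by exists x.
by move=> s [y [y1 ->]]; apply: opnorm_bnd.
Qed.

Lemma opnorm_le n (A : 'M[C]_n) c : 0 <= c ->
  (forall x, vnorm x = 1 -> vnorm (A *m x) <= c) -> opnorm A <= c.
Proof. by move=> c0 h; apply: sup_le_gen => // r [x [x1 ->]]; apply: h. Qed.

Lemma opnorm_ge0 n (A : 'M[C]_n) : 0 <= opnorm A.
Proof.
apply: (@sup_ge0_gen _ (Kop A)); first by move=> s [y [y1 ->]]; apply: opnorm_bnd.
by move=> s [y [y1 ->]]; apply: vnorm_ge0.
Qed.

Lemma cmod_pos (r : R) : 0 <= r -> cmod r%:C = r.
Proof. by move=> r0; rewrite cmod_real ger0_norm. Qed.

Lemma normalize n (x : 'cV[C]_n) : x != 0 ->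
  vnorm ((vnorm x)^-1%:C *: x) = 1 /\ x = (vnorm x)%:C *: ((vnorm x)^-1%:C *: x).
Proof.
move=> x0; have v0 : vnorm x != 0 by apply: contra x0 => /eqP/vnorm_eq0 ->.
split; first by rewrite vnormZ cmod_pos ?invr_ge0 ?vnorm_ge0 // mulVf.
by rewrite scalerA -rmorphM /= divff // scale1r.
Qed.

Lemma opnorm_mul n (A : 'M[C]_n) x : vnorm (A *m x) <= opnorm A * vnorm x.
Proof.
have [->|x0] := eqVneq x 0; first by rewrite mulmx0 !vnorm0 mulr0.
have [u1 xe] := normalize x0.
rewrite {1}xe -scalemxAr vnormZ cmod_pos ?vnorm_ge0 // [leRHS]mulrC.
by rewrite ler_wpM2l ?vnorm_ge0 ?opnorm_ub.
Qed.


Lemma col_delta n (A : 'M[C]_n) j : A *m delta_mx j 0 = col j A.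
Proof.
apply/matrixP => i k; rewrite ord1 !mxE (bigD1 j) //= big1 ?addr0.
  by rewrite !mxE !eqxx mulr1.
by move=> l lj; rewrite !mxE (negbTE lj) mulr0.
Qed.

Lemma opnorm_eq0 n (A : 'M[C]_n) : opnorm A = 0 -> A = 0.
Proof.
move=> h; apply/matrixP => i j.
have := opnorm_ub A (vnorm_delta j); rewrite h col_delta => le0.
have /vnorm_eq0/matrixP/(_ i 0) : vnorm (col j A) = 0.
  by apply/le_anti; rewrite le0 vnorm_ge0.
by rewrite !mxE.
Qed.

Lemma opnorm0 n : opnorm (0 : 'M[C]_n) = 0.
Proof.
apply/le_anti; rewrite opnorm_ge0 andbT; apply: opnorm_le => // x _.
by rewrite mul0mx vnorm0.
Qed.

Lemma opnorm_Zle n (c : C) (A : 'M[C]_n) : opnorm (c *: A) <= cmod c * opnorm A.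
Proof.
apply: opnorm_le; first by rewrite mulr_ge0 ?cmod_ge0 ?opnorm_ge0.
move=> x x1; rewrite -scalemxAl vnormZ ler_wpM2l ?cmod_ge0 //.
exact: opnorm_ub.
Qed.

Lemma opnormZ n (c : C) (A : 'M[C]_n) : opnorm (c *: A) = cmod c * opnorm A.
Proof.
apply/le_anti; rewrite opnorm_Zle /=.
have [->|c0] := eqVneq c 0; first by rewrite cmod0 mul0r opnorm_ge0.
have := opnorm_Zle c^-1 (c *: A); rewrite scalerA mulVf // scale1r.
have cp : 0 < cmod c by rewrite lt_def cmod_eq0 c0 cmod_ge0.
have -> : cmod c^-1 = (cmod c)^-1.
  by apply: (mulfI (lt0r_neq0 cp)); rewrite -cmodM divff // cmod1 divff ?lt0r_neq0.
by rewrite -(ler_pM2l cp) mulrA divff ?lt0r_neq0 // mul1r.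
Qed.

Lemma opnormD n (A B : 'M[C]_n) : opnorm (A + B) <= opnorm A + opnorm B.
Proof.
apply: opnorm_le; first by rewrite addr_ge0 ?opnorm_ge0.
move=> x x1; rewrite mulmxDl; apply: le_trans (vnormD _ _) _.
by rewrite lerD ?opnorm_ub.
Qed.

Lemma opnorm_norm n : is_norm (@opnorm R n).
Proof.
split; [exact: opnorm_ge0 | exact: opnorm_eq0 | exact: opnormZ | exact: opnormD].
Qed.

Lemma adjmx_mul m n p (A : 'M[C]_(m, n)) (B : 'M[C]_(n, p)) :
  adjmx (A *m B) = adjmx B *m adjmx A.
Proof. by rewrite /adjmx map_mxM trmx_mul. Qed.

Lemma adjmxK m n (A : 'M[C]_(m, n)) : adjmx (adjmx A) = A.
Proof. by apply/matrixP => i j; rewrite !mxE conjcK. Qed.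

Lemma adjmxD m n (A B : 'M[C]_(m, n)) : adjmx (A + B) = adjmx A + adjmx B.
Proof. by apply/matrixP => i j; rewrite !mxE rmorphD. Qed.

Lemma adjmxZ m n c (A : 'M[C]_(m, n)) : adjmx (c *: A) = conjC c *: adjmx A.
Proof. by apply/matrixP => i j; rewrite !mxE rmorphM. Qed.

Lemma ip_adj n (M : 'M[C]_n) (u v : 'cV[C]_n) : ip u (adjmx M *m v) = ip (M *m u) v.
Proof. by rewrite /ip adjmx_mul mulmxA. Qed.

Lemma ip_sumr n k (u : 'cV[C]_n) (f : 'I_k -> 'cV[C]_n) :
  ip u (\sum_i f i) = \sum_i ip u (f i).
Proof. by rewrite /ip mulmx_sumr summxE. Qed.

Lemma ipxx n (x : 'cV[C]_n) : ip x x = (vnorm x ^+ 2)%:C.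
Proof. by rewrite vnorm2C. Qed.

Lemma ip_opnorm n (M : 'M[C]_n) (u v : 'cV[C]_n) :
  cmod (ip u (M *m v)) <= vnorm u * (opnorm M * vnorm v).
Proof.
apply: le_trans (ip_CS _ _) _; rewrite ler_wpM2l ?vnorm_ge0 //.
exact: opnorm_mul.
Qed.

Lemma amgm (a b t : R) : 2 * t * (a * b) <= a ^+ 2 + t ^+ 2 * b ^+ 2.
Proof. have := sqr_ge0 (a - t * b); rewrite sqrrB; lra. Qed.

Lemma opnorm_M n : is_Mnorm (@opnorm R n).
Proof.
split; first exact: opnorm_norm.
move=> k X Cs hC; set m := \big[Num.max/0]_(i < k) opnorm (X i).
have m0 : 0 <= m by rewrite /m; elim/big_rec: _ => // i y _ y0; rewrite le_max y0 orbT.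
have mX i : opnorm (X i) <= m by rewrite /m; apply: le_bigmax.
apply: opnorm_le => // x x1.
set B := \sum_i _; set y := B *m x.
set a := fun i => vnorm (Cs i *m y); set b := fun i => vnorm (Cs i *m x).
have sumsq (z : 'cV[C]_n) : \sum_i vnorm (Cs i *m z) ^+ 2 = vnorm z ^+ 2.
  apply: (@complexI R); rewrite rmorph_sum /=.
  under eq_bigr => i _ do rewrite vnorm2C -ip_adj mulmxA.
  by rewrite -ip_sumr -mulmx_suml hC mul1mx vnorm2C.
have sa : \sum_i a i ^+ 2 = vnorm y ^+ 2 by apply: sumsq.
have sb : \sum_i b i ^+ 2 = 1 by rewrite sumsq x1 expr1n.
have key : vnorm y ^+ 2 <= m * \sum_i a i * b i.
  have -> : vnorm y ^+ 2 = cmod (ip y y).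
    by rewrite ipxx cmod_pos // exprn_ge0 // vnorm_ge0.
  rewrite {2}/y /B mulmx_suml ip_sumr; apply: le_trans (cmodD_sum _) _.
  rewrite mulr_sumr; apply: ler_sum => i _.
  rewrite -!mulmxA ip_adj; apply: le_trans (ip_opnorm _ _ _) _.
  by rewrite /a /b mulrCA ler_wpM2r ?mulr_ge0 ?vnorm_ge0.
have [y0|ypos] := eqVneq (vnorm y) 0; first by rewrite y0.
have tp : 0 < vnorm y by rewrite lt_def ypos vnorm_ge0.
have hab : 2 * vnorm y * \sum_i a i * b i <= 2 * vnorm y ^+ 2.
  rewrite mulr_sumr; apply: le_trans (ler_sum _ (fun i _ => amgm (a i) (b i) (vnorm y))) _.
  by rewrite big_split /= -mulr_sumr sa sb mulr1 -mulr2n mulr_natl.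
have hab' : \sum_i a i * b i <= vnorm y.
  rewrite -(ler_pM2l (_ : 0 < 2 * vnorm y)) ?mulr_gt0 //.
  by move: hab; rewrite expr2 mulrA.
have : vnorm y ^+ 2 <= m * vnorm y by apply: le_trans key _; rewrite ler_wpM2l.
by rewrite expr2 ler_pM2r.
Qed.


Lemma ip_addl n (u v w : 'cV[C]_n) : ip (u + v) w = ip u w + ip v w.
Proof. by rewrite /ip adjmxD mulmxDl mxE. Qed.

Lemma ip_addr n (u v w : 'cV[C]_n) : ip u (v + w) = ip u v + ip u w.
Proof. by rewrite /ip mulmxDr mxE. Qed.

Lemma ip_scalel n c (u w : 'cV[C]_n) : ip (c *: u) w = conjC c * ip u w.
Proof. by rewrite /ip adjmxZ -scalemxAl mxE. Qed.

Lemma ip_scaler n c (u w : 'cV[C]_n) : ip u (c *: w) = c * ip u w.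
Proof. by rewrite /ip -scalemxAr mxE. Qed.

Lemma quadE n (X : 'M[C]_n) x : quadform X x = ip x (X *m x).
Proof. by rewrite /quadform /ip mulmxA. Qed.

Lemma quad_lin n (X : 'M[C]_n) u v c :
  quadform X (u + c *: v) = quadform X u + c * ip u (X *m v)
    + conjC c * ip v (X *m u) + conjC c * c * quadform X v.
Proof.
rewrite !quadE mulmxDr -scalemxAr ip_addl !ip_addr !ip_scalel !ip_scaler.
by rewrite mulrA; ring.
Qed.

Lemma polar_gen (p q r s f1 f2 f3 f4 : C) :
  f1 = p + 1 * q + conjC 1 * r + conjC 1 * 1 * s ->
  f2 = p + (-1) * q + conjC (-1) * r + conjC (-1) * (-1) * s ->
  f3 = p + 'i * q + conjC 'i * r + conjC 'i * 'i * s ->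
  f4 = p + (- 'i) * q + conjC (- 'i) * r + conjC (- 'i) * (- 'i) * s ->
  4 * q = f1 - f2 + (- 'i) * f3 + 'i * f4.
Proof.
have c1 : conjC (1 : C) = 1 by exact: conjc1.
have c2 : conjC (-1 : C) = -1 by rewrite rmorphN1.
have c3 : conjC ('i : C) = - 'i by exact: conjCi.
have c4 : conjC (- 'i : C) = 'i by rewrite raddfN /= conjCi opprK.
rewrite c1 c2 c3 c4 => -> -> -> ->.
have e : 4 * q = 2 * q + 2 * r - 2 * ('i ^+ 2) * (q - r).
  by rewrite sqrCi; ring.
by rewrite e; ring.
Qed.

Lemma polar n (X : 'M[C]_n) u v :
  4 * ip u (X *m v) = quadform X (u + 1 *: v) - quadform X (u + (-1) *: v)
    + (- 'i) * quadform X (u + 'i *: v) + 'i * quadform X (u + (- 'i) *: v).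
Proof.
exact: (polar_gen (quad_lin X u v 1) (quad_lin X u v (-1)) (quad_lin X u v 'i) (quad_lin X u v (-'i))).
Qed.

Lemma quad_scale n (X : 'M[C]_n) (t : R) x :
  quadform X (t%:C *: x) = (t ^+ 2)%:C * quadform X x.
Proof.
rewrite !quadE -scalemxAr ip_scalel ip_scaler mulrA rmorphXn /=.
have -> : conjC (t%:C) = t%:C by exact: (conjc_real t).
by rewrite expr2.
Qed.

Lemma Wbnd n (X : 'M[C]_n) x : vnorm x = 1 -> cmod (quadform X x) <= opnorm X.
Proof.
move=> x1; rewrite quadE; apply: le_trans (ip_opnorm _ _ _) _.
by rewrite x1 !mul1r mulr1.
Qed.

Lemma numrad_ub n (X : 'M[C]_n) x : vnorm x = 1 -> cmod (quadform X x) <= numrad X.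
Proof.
move=> x1; apply: (@sup_ge_gen _ (opnorm X)); last by exists x.
by move=> s [y [y1 ->]]; apply: Wbnd.
Qed.

Lemma numrad_le n (X : 'M[C]_n) c : 0 <= c ->
  (forall x, vnorm x = 1 -> cmod (quadform X x) <= c) -> numrad X <= c.
Proof. by move=> c0 h; apply: sup_le_gen => // r [x [x1 ->]]; apply: h. Qed.

Lemma numrad_ge0 n (X : 'M[C]_n) : 0 <= numrad X.
Proof.
apply: (@sup_ge0_gen _ (opnorm X)); first by move=> s [y [y1 ->]]; apply: Wbnd.
by move=> s [y [y1 ->]]; apply: cmod_ge0.
Qed.

Lemma numrad_gen n (X : 'M[C]_n) w : cmod (quadform X w) <= numrad X * vnorm w ^+ 2.
Proof.
have [->|w0] := eqVneq w 0.
  by rewrite quadE mulmx0 /ip mulmx0 mxE cmod0 vnorm0 expr0n /= mulr0.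
have [u1 we] := normalize w0; rewrite {1}we quad_scale cmodM cmod_pos; last first.
  by rewrite exprn_ge0 ?vnorm_ge0.
by rewrite mulrC ler_wpM2r ?exprn_ge0 ?vnorm_ge0 // numrad_ub.
Qed.

Lemma entry_ip n (X : 'M[C]_n) i j : X i j = ip (delta_mx i 0) (X *m delta_mx j 0).
Proof.
rewrite col_delta ipE (bigD1 i) //= big1 ?addr0.
  by rewrite !mxE !eqxx rmorph1 mul1r.
by move=> l li; rewrite !mxE (negbTE li) rmorph0 mul0r.
Qed.

Lemma entry_bnd n (X : 'M[C]_n) i j : cmod (X i j) <= 4 * numrad X.
Proof.
set ei : 'cV[C]_n := delta_mx i 0; set ej : 'cV[C]_n := delta_mx j 0.
have hb c : cmod c = 1 -> cmod (quadform X (ei + c *: ej)) <= 4 * numrad X.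
  move=> c1; apply: le_trans (numrad_gen _ _) _; rewrite mulrC ler_wpM2r ?numrad_ge0 //.
  have : vnorm (ei + c *: ej) <= 2.
    apply: le_trans (vnormD _ _) _; rewrite vnormZ c1 mul1r !vnorm_delta.
    by rewrite -[2]/(1 + 1).
  move=> h; have -> : 4 = 2 ^+ 2 :> R by rewrite expr2; lra.
  by rewrite ler_sqr ?nnegrE ?vnorm_ge0.
have ci : cmod ('i : C) = 1.
  by apply: (@complexI R); rewrite cmodE normCi rmorph1.
have cN1 : cmod (-1 : C) = 1 by rewrite cmodN cmod1.
have cNi : cmod (- 'i : C) = 1 by rewrite cmodN ci.
have hc d c : cmod d = 1 -> cmod c = 1 -> cmod (d * quadform X (ei + c *: ej)) <= 4 * numrad X.
  by move=> d1 c1; rewrite cmodM d1 mul1r hb.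
have h4 : cmod (4 * X i j) <= 4 * numrad X + 4 * numrad X + 4 * numrad X + 4 * numrad X.
  rewrite entry_ip polar.
  apply: le_trans (cmodD _ _) _; apply: lerD; last exact: (hc _ _ ci cNi).
  apply: le_trans (cmodD _ _) _; apply: lerD; last exact: (hc _ _ cNi ci).
  apply: le_trans (cmodD _ _) _; apply: lerD.
    by have := hc 1 1 cmod1 cmod1; rewrite mul1r.
  by rewrite cmodN; have := hc 1 (-1) cmod1 cN1; rewrite mul1r.
have c4 : cmod (4 : C) = 4.
  by apply: (@complexI R); rewrite cmodE normr_nat rmorph_nat.
move: h4; rewrite cmodM c4; lra.
Qed.


Definition KD n (A : 'M[C]_n) := 4 * \sum_i \sum_j cmod (A i j).

Lemma trace_adj n (A X : 'M[C]_n) :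
  \tr (adjmx A *m X) = \sum_j \sum_i conjC (A i j) * X i j.
Proof.
rewrite /mxtrace; apply: eq_bigr => j _; rewrite mxE.
by apply: eq_bigr => i _; rewrite !mxE.
Qed.

Lemma dual_bnd n (A X : 'M[C]_n) : numrad X <= 1 ->
  cmod (\tr (adjmx A *m X)) <= KD A.
Proof.
move=> h; rewrite trace_adj /KD; apply: le_trans (cmodD_sum _) _.
rewrite [X in _ <= 4 * X]exchange_big mulr_sumr /=; apply: ler_sum => j _.
apply: le_trans (cmodD_sum _) _; rewrite mulr_sumr; apply: ler_sum => i _.
rewrite cmodM cmod_conj mulrC ler_wpM2r ?cmod_ge0 //.
apply: le_trans (entry_bnd _ _ _) _; lra.
Qed.

Lemma dual_ub n (A X : 'M[C]_n) : numrad X <= 1 ->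
  cmod (\tr (adjmx A *m X)) <= numrad_dual A.
Proof.
move=> h; apply: (@sup_ge_gen _ (KD A)); last by exists X.
by move=> s [Y [Y1 ->]]; apply: dual_bnd.
Qed.

Lemma dual_ge0 n (A : 'M[C]_n) : 0 <= numrad_dual A.
Proof.
apply: (@sup_ge0_gen _ (KD A)); first by move=> s [Y [Y1 ->]]; apply: dual_bnd.
by move=> s [Y [Y1 ->]]; apply: cmod_ge0.
Qed.

Lemma mx11_mul m (P : 'M[C]_(1, m)) (Q : 'M[C]_(m, 1)) (S : 'M[C]_(1,1)) (T : 'M[C]_(1, 1)) :
  (S *m T) 0 0 = S 0 0 * T 0 0.
Proof. by rewrite mxE big_ord1. Qed.

Lemma op_le_dual n (A : 'M[C]_n) : opnorm A <= numrad_dual A.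
Proof.
apply: opnorm_le; first exact: dual_ge0.
move=> x x1; have [->|Ax0] := eqVneq (A *m x) 0; first by rewrite vnorm0 dual_ge0.
have [y1 Axe] := normalize Ax0.
set y := ((vnorm (A *m x))^-1%:C *: (A *m x)); set t := vnorm (A *m x).
pose X := y *m adjmx x.
have hX : numrad X <= 1.
  apply: numrad_le => // z z1.
  have -> : quadform X z = ip z y * ip x z.
    rewrite /quadform /X !mulmxA -[adjmx z *m y *m adjmx x *m z]mulmxA.
    by rewrite (mx11_mul (adjmx x) z).
  rewrite cmodM; apply: le_trans (ler_pM (cmod_ge0 _) (cmod_ge0 _) (ip_CS _ _) (ip_CS _ _)) _.
  by rewrite z1 y1 x1 !mulr1.
apply: le_trans (dual_ub A hX).
have -> : \tr (adjmx A *m X) = ip (A *m x) y.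
  rewrite /X mulmxA mxtrace_mulC mulmxA -adjmx_mul trace_mx11 //.
rewrite {1}Axe ip_scalel.
have -> : conjC (t%:C) = t%:C by exact: (conjc_real t).
rewrite ipxx y1 expr1n mulr1 cmod_pos //; exact: vnorm_ge0.
Qed.


Lemma adj_delta m n (i : 'I_m) (j : 'I_n) :
  adjmx (delta_mx i j : 'M[C]_(m, n)) = delta_mx j i.
Proof.
apply/matrixP => a b; rewrite !mxE.
by rewrite rmorph_nat andbC.
Qed.

Lemma adjE n (M : 'M[C]_n) : adjmx M = (M ^t conjC)%sesqui.
Proof. exact: map_trmx. Qed.

Lemma iso_vnorm n (M : 'M[C]_n) x : adjmx M *m M = 1%:M -> vnorm (M *m x) = vnorm x.
Proof.
move=> hM; have e : vnorm (M *m x) ^+ 2 = vnorm x ^+ 2.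
  by apply: (@complexI R); rewrite !vnorm2C -ip_adj mulmxA hM mul1mx.
by rewrite -[LHS]ger0_norm ?vnorm_ge0 // -sqrtr_sqr e sqrtr_sqr ger0_norm ?vnorm_ge0.
Qed.

Lemma uni_entry n (M : 'M[C]_n) j : adjmx M *m M = 1%:M -> cmod (M j j) <= 1.
Proof.
move=> hM; have := cmod_le_vnorm (M *m delta_mx j 0) j.
by rewrite iso_vnorm // vnorm_delta col_delta mxE.
Qed.

Lemma uni_mul n (A B : 'M[C]_n) : adjmx A *m A = 1%:M -> adjmx B *m B = 1%:M ->
  adjmx (A *m B) *m (A *m B) = 1%:M.
Proof.
by move=> hA hB; rewrite adjmx_mul mulmxA -[adjmx B *m _ *m A]mulmxA hA mulmx1.
Qed.

Lemma adj_diag n (d : 'rV[C]_n) : adjmx (diag_mx d) = diag_mx (\row_j conjC (d 0 j)).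
Proof.
apply/matrixP => a b; rewrite !mxE.
case: (eqVneq b a) => [->|ba]; first by rewrite !mulr1n.
by rewrite !mulr0n conjc0.
Qed.

Lemma diag_one n (d : 'rV[C]_n) : (forall j, d 0 j = 1) -> diag_mx d = 1%:M.
Proof.
move=> h; rewrite -diag_const_mx; congr diag_mx; apply/rowP => j.
by rewrite h mxE.
Qed.

Lemma ip_adjr n (M : 'M[C]_n) (u v : 'cV[C]_n) : ip u (M *m v) = ip (adjmx M *m u) v.
Proof. by rewrite -ip_adj adjmxK. Qed.

Lemma conj_real (r : R) : conjC (r%:C) = r%:C.
Proof. exact: (conjc_real r). Qed.

Lemma half_cmod : cmod (2^-1 : C) = 2^-1.
Proof.
have -> : (2^-1 : C) = (2^-1 : R)%:C by rewrite fmorphV rmorph_nat.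
by rewrite cmod_pos // invr_ge0.
Qed.

Lemma unit_entry (t s : R) : s ^+ 2 = 1 - t ^+ 2 ->
  conjC (t%:C + 'i * s%:C) * (t%:C + 'i * s%:C) = 1 /\
  conjC (t%:C - 'i * s%:C) * (t%:C - 'i * s%:C) = 1.
Proof.
move=> hs; rewrite !(rmorphD, rmorphN, rmorphM) /= !conj_real conjCi.
have e1 : (1 : C) = ((t ^+ 2)%:C + (s ^+ 2)%:C) by rewrite hs -rmorphD /= addrC subrK rmorph1.
rewrite e1 !rmorphXn /=.
have ii : 'i * 'i = -1 :> C by rewrite -expr2 sqrCi.
split.
  apply: (@eq_trans _ _ (t%:C ^+ 2 - ('i * 'i) * s%:C ^+ 2)); first by ring.
  by rewrite ii; ring.
apply: (@eq_trans _ _ (t%:C ^+ 2 - ('i * 'i) * s%:C ^+ 2)); first by ring.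
by rewrite ii; ring.
Qed.

Lemma mxA5 n (A X Y Z W : 'M[C]_n) : A *m X *m Y *m Z *m W = A *m (X *m (Y *m Z) *m W).
Proof. by rewrite !mulmxA. Qed.

Lemma mxA3 n (A X Y Z W : 'M[C]_n) : A *m X *m Y *m Z *m W = A *m (X *m Y *m Z) *m W.
Proof. by rewrite !mulmxA. Qed.

Lemma mxA2 n (A X Y Z W : 'M[C]_n) : A *m X *m Y *m Z *m W = A *m X *m (Y *m Z) *m W.
Proof. by rewrite !mulmxA. Qed.

Section Maximal.
Variable n' : nat.
Local Notation n := n'.+1.
Variable N : 'M[C]_n -> R.
Hypothesis NM : is_Mnorm N.
Hypothesis Nd : forall A, N A <= numrad_dual A.

Let Nn : is_norm N := NM.1.
Lemma N_ge0 A : 0 <= N A. Proof. by case: Nn. Qed.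
Lemma NZ c A : N (c *: A) = cmod c * N A. Proof. by case: Nn. Qed.
Lemma ND A B : N (A + B) <= N A + N B. Proof. by case: Nn. Qed.

Lemma N_unitary_conj (U X : 'M[C]_n) : adjmx U *m U = 1%:M ->
  N (adjmx U *m X *m U) <= N X.
Proof.
move=> hU; have := NM.2 1 (fun _ => X) (fun _ => U).
rewrite !big_ord1 => /(_ hU) h; apply: le_trans h _.
by apply/bigmax_leP; split; [exact: N_ge0 | move=> i _].
Qed.

Let E00 : 'M[C]_n := delta_mx 0 0.

Lemma N_E00 : N E00 <= 1.
Proof.
apply: le_trans (Nd _) _; apply: sup_le_gen => // r [X [X1 ->]].
have -> : \tr (adjmx E00 *m X) = X 0 0.
  rewrite trace_adj (bigD1 0) //=.
  rewrite [X in _ + X]big1 => [|j j0]; last first.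
    by rewrite big1 // => i _; rewrite /E00 !mxE (negbTE j0) andbF rmorph0 mul0r.
  rewrite addr0 (bigD1 0) //=.
  rewrite [X in _ + X]big1 => [|i i0]; last first.
    by rewrite /E00 !mxE (negbTE i0) rmorph0 mul0r.
  by rewrite addr0 /E00 !mxE !eqxx rmorph1 mul1r.
rewrite entry_ip -quadE; apply: le_trans X1.
by apply: numrad_ub; rewrite vnorm_delta.
Qed.

Lemma N_diag (d : 'rV[C]_n) : (forall j, cmod (d 0 j) <= 1) -> N (diag_mx d) <= 1.
Proof.
move=> hd; have := NM.2 n (fun i => d 0 i *: E00) (fun i => delta_mx 0 i).
have -> : \sum_(i < n) adjmx (delta_mx 0 i : 'M[C]_n) *m delta_mx 0 i = 1%:M.
  rewrite mx1_sum_delta; apply: eq_bigr => i _.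
  by rewrite adj_delta mul_delta_mx.
have -> : \sum_(i < n) adjmx (delta_mx 0 i : 'M[C]_n) *m (d 0 i *: E00) *m delta_mx 0 i
    = diag_mx d.
  rewrite diag_mx_sum_delta; apply: eq_bigr => i _.
  by rewrite adj_delta /E00 -scalemxAr -scalemxAl !mul_delta_mx.
move=> /(_ erefl) h; apply: le_trans h _.
apply/bigmax_leP; split => // i _; rewrite NZ.
by apply: mulr_ile1; rewrite ?cmod_ge0 ?N_ge0 ?hd ?N_E00.
Qed.

Lemma N_unitary (U : 'M[C]_n) : adjmx U *m U = 1%:M -> N U <= 1.
Proof.
move=> hU; have hU' : U *m adjmx U = 1%:M by apply: mulmx1C.
have /orthomx_spectralP : U \is normalmx.
  by apply/normalmxP; rewrite -!adjE hU hU'.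
set P := spectralmx U; set D := diag_mx _ => Ue.
have /unitarymxP hP := spectral_unitarymx U; rewrite -/P -adjE in hP.
have hP' : adjmx P *m P = 1%:M by apply: mulmx1C.
rewrite invmx_unitary ?spectral_unitarymx // -/P -adjE in Ue.
have hD : D = P *m U *m adjmx P.
  by rewrite Ue !mulmxA hP mul1mx -mulmxA hP mulmx1.
rewrite Ue; apply: le_trans (N_unitary_conj _ hP') _.
apply: N_diag => j; have := @uni_entry _ D j; rewrite {2}/D mxE eqxx mulr1n; apply.
rewrite -/D hD; apply: uni_mul; first (apply: uni_mul => //).
by rewrite adjmxK.
Qed.

Lemma N_inv (B : 'M[C]_n) : B \in unitmx -> opnorm B <= 1 -> N B <= 1.
Proof.
move=> Bu Bop.
set H := adjmx B *m B.
have Hh : adjmx H = H by rewrite /H adjmx_mul adjmxK.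
have /orthomx_spectralP : H \is normalmx by apply/normalmxP; rewrite -!adjE Hh.
set P := spectralmx H; set Dh := diag_mx _ => He.
have /unitarymxP hP := spectral_unitarymx H; rewrite -/P -adjE in hP.
have hP' : adjmx P *m P = 1%:M by apply: mulmx1C.
rewrite invmx_unitary ?spectral_unitarymx // -/P -adjE in He.
set Pa := adjmx P in hP hP' He.
have hDh : Dh = P *m H *m Pa.
  by rewrite He !mulmxA hP mul1mx -mulmxA hP mulmx1.
pose w (j : 'I_n) : 'cV[C]_n := Pa *m delta_mx j 0.
have hPa : adjmx Pa *m Pa = 1%:M by rewrite /Pa adjmxK.
have w1 j : vnorm (w j) = 1 by rewrite /w iso_vnorm // vnorm_delta.
pose t (j : 'I_n) := vnorm (B *m w j).
have tle j : t j <= 1 by apply: le_trans (opnorm_ub B (w1 j)) Bop.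
have tpos j : 0 < t j.
  rewrite lt_def vnorm_ge0 andbT; apply/negP => /eqP /vnorm_eq0 Bw0.
  have : w j = 0 by rewrite -(mulKmx Bu (w j)) Bw0 mulmx0.
  by move=> wj0; have := w1 j; rewrite wj0 vnorm0 => /eqP; rewrite eq_sym oner_eq0.
have hdiag j : spectral_diag H 0 j = (t j ^+ 2)%:C.
  have <- : Dh j j = spectral_diag H 0 j by rewrite mxE eqxx mulr1n.
  rewrite hDh entry_ip -!mulmxA ip_adjr -/(w j).
  by rewrite ip_adj ipxx.
pose s j := Num.sqrt (1 - t j ^+ 2).
have hs j : s j ^+ 2 = 1 - t j ^+ 2.
  rewrite sqr_sqrtr // subr_ge0 expr_le1 //; exact: vnorm_ge0.
pose si := \row_j ((t j)^-1)%:C.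
pose st := \row_j (t j)%:C.
pose ep := \row_j ((t j)%:C + 'i * (s j)%:C).
pose em := \row_j ((t j)%:C - 'i * (s j)%:C).
pose U := B *m Pa *m diag_mx si *m P.
pose W (e : 'rV[C]_n) := Pa *m diag_mx e *m P.
have tnz j : t j != 0 by rewrite lt0r_neq0.
have adj_si : adjmx (diag_mx si) = diag_mx si.
  by rewrite adj_diag; congr diag_mx; apply/rowP => j; rewrite !mxE conj_real.
have hsi : diag_mx si *m Dh *m diag_mx si = 1%:M.
  rewrite /Dh !mulmx_diag; apply: diag_one => j; rewrite !mxE hdiag -!rmorphM /=.
  by rewrite expr2 mulrA mulVf // mul1r divff // rmorph1.
have hU : adjmx U *m U = 1%:M.
  rewrite /U !adjmx_mul adj_si /Pa adjmxK -/Pa.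
  rewrite !mulmxA (mxA5 (Pa *m diag_mx si) P (adjmx B) B Pa) -/H -hDh.
  by rewrite (mxA3 Pa (diag_mx si) Dh (diag_mx si) P) hsi mulmx1 hP'.
have hW (e : 'rV[C]_n) : (forall j, conjC (e 0 j) * e 0 j = 1) -> adjmx (W e) *m W e = 1%:M.
  move=> he; rewrite /W !adjmx_mul /Pa adjmxK -/Pa.
  rewrite !mulmxA (mxA2 Pa (adjmx (diag_mx e)) P Pa (diag_mx e)) hP mulmx1.
  rewrite -(mulmxA Pa) adj_diag mulmx_diag diag_one ?mulmx1 ?hP' // => j.
  by rewrite !mxE he.
have hep : adjmx (W ep) *m W ep = 1%:M.
  by apply: hW => j; rewrite !mxE; case: (unit_entry (hs j)).
have hem : adjmx (W em) *m W em = 1%:M.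
  by apply: hW => j; rewrite !mxE; case: (unit_entry (hs j)).
have hst : 2^-1 *: (diag_mx ep + diag_mx em) = diag_mx st.
  apply/matrixP => a b; rewrite !mxE.
  case: (eqVneq a b) => [->|ab]; last by rewrite !mulr0n addr0 mulr0.
  rewrite !mulr1n; set x := (t b)%:C; set c := 'i * _.
  rewrite (_ : x + c + (x - c) = 2 * x); last by ring.
  by rewrite mulrA mulVf ?mul1r // pnatr_eq0.
have hsist : diag_mx si *m diag_mx st = 1%:M.
  by rewrite mulmx_diag; apply: diag_one => j; rewrite !mxE -rmorphM /= mulVf // rmorph1.
have Be : B = 2^-1 *: (U *m W ep) + 2^-1 *: (U *m W em).
  rewrite -scalerDr -mulmxDr /W -mulmxDl -mulmxDr.
  rewrite scalemxAr scalemxAl scalemxAr hst /U.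
  rewrite !mulmxA (mxA2 (B *m Pa) (diag_mx si) P Pa (diag_mx st)) hP mulmx1.
  by rewrite -(mulmxA (B *m Pa)) hsist mulmx1 -mulmxA hP' mulmx1.
have h1 : N (U *m W ep) <= 1 by apply: N_unitary; apply: uni_mul.
have h2 : N (U *m W em) <= 1 by apply: N_unitary; apply: uni_mul.
have := ND (2^-1 *: (U *m W ep)) (2^-1 *: (U *m W em)).
rewrite -Be !NZ half_cmod; lra.
Qed.

Lemma adj1 : adjmx (1%:M : 'M[C]_n) = 1%:M.
Proof. by apply/matrixP => a b; rewrite !mxE conjc_nat eq_sym. Qed.

Lemma opnorm1 : opnorm (1%:M : 'M[C]_n) <= 1.
Proof. by apply: opnorm_le => // x x1; rewrite mul1mx x1. Qed.

Lemma N1 : N 1%:M <= 1.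
Proof. by apply: N_unitary; rewrite adj1 mulmx1. Qed.

Lemma N_unit_op (B : 'M[C]_n) : B \in unitmx -> N B <= opnorm B.
Proof.
move=> Bu; set o := opnorm B.
have o0 : o != 0.
  apply/eqP => /opnorm_eq0 B0; have := mulmxV Bu; rewrite B0 mul0mx.
  by move/matrixP/(_ 0 0); rewrite !mxE eqxx /= => /eqP; rewrite eq_sym oner_eq0.
have opos : 0 < o by rewrite lt_def o0 opnorm_ge0.
set B' := (o^-1)%:C *: B.
have hB : B = o%:C *: B' by rewrite /B' scalerA -rmorphM /= divff // rmorph1 scale1r.
have B'u : B' \in unitmx.
  rewrite /B' unitmxZ // unitfE; apply/eqP => /(@complexI R) /eqP.
  by rewrite invr_eq0 (negbTE o0).
have B'1 : opnorm B' <= 1.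
  by rewrite /B' opnormZ cmod_pos ?invr_ge0 ?opnorm_ge0 // mulVf.
rewrite {1}hB NZ cmod_pos ?opnorm_ge0 // -{2}[o]mulr1.
by rewrite ler_wpM2l ?opnorm_ge0 // N_inv.
Qed.

Lemma exists_unit_shift (A : 'M[C]_n) (e : R) : 0 < e ->
  exists t : R, [/\ 0 < t, t <= e & A + (t%:C)%:M \in unitmx].
Proof.
move=> e0; case: (pselect (exists t : R, [/\ 0 < t, t <= e & A + (t%:C)%:M \in unitmx])) => // H.
exfalso.
pose f (k : nat) : R := e / (k.+1)%:R.
have fpos k : 0 < f k by rewrite /f divr_gt0 // ltr0n.
have fle k : f k <= e.
  by rewrite /f ler_pdivrMr ?ltr0n // ler_pMr // ler1n.
pose rs := [seq - (f k)%:C | k <- iota 0 n.+1].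
suff : (size rs < size (char_poly A))%N by rewrite size_char_poly size_map size_iota ltnn.
apply: max_poly_roots; first exact: (monic_neq0 (char_poly_monic A)).
  apply/allP => r /mapP [k _ ->]; rewrite -eigenvalue_root_char /eigenvalue /eigenspace.
  rewrite kermx_eq0 row_free_unit raddfN /= opprK.
  by apply/negP => hu; apply: H; exists (f k).
rewrite map_inj_uniq ?iota_uniq // => k1 k2 /oppr_inj /(@complexI R).
rewrite /f => /(mulfI (lt0r_neq0 e0)) /invr_inj /eqP.
by rewrite eqr_nat eqSS => /eqP.
Qed.

Lemma N_le_op (A : 'M[C]_n) : N A <= opnorm A.
Proof.
apply/ler_addgt0Pr => e e0.
have e20 : 0 < e / 2 by rewrite divr_gt0.
have [t [t0 te tu]] := exists_unit_shift A e20.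
have hA : A = (A + (t%:C)%:M) + (- t%:C) *: 1%:M.
  by rewrite scaleNr scalemx1 addrK.
rewrite {1}hA; apply: (le_trans (ND _ _)); rewrite NZ cmodN (cmod_pos (ltW t0)).
apply: (le_trans (lerD (N_unit_op tu) (ler_wpM2l (ltW t0) N1))).
apply: (le_trans (lerD (opnormD _ _) (lexx _))).
rewrite -scalemx1 opnormZ (cmod_pos (ltW t0)).
have := opnorm1; have := opnorm_ge0 A.
move: te; rewrite ler_pdivlMr // => te.
nra.
Qed.

End Maximal.

End Aux.

Unset Implicit Arguments.

Theorem corollary3p5 (R : realType) (n : nat) :
  (* the operator norm belongs to the class ... *)
  (is_Mnorm (@opnorm R n) /\ (forall A : 'M[R[i]]_n, opnorm A <= numrad_dual A)) /\
  (* ... and dominates every member of the class *)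
  (forall N : 'M[R[i]]_n -> R,
     is_Mnorm N -> (forall A, N A <= numrad_dual A) ->
     forall A, N A <= opnorm A).
Proof.
split; first by split; [exact: opnorm_M | exact: op_le_dual].
case: n => [|n'] N NM Nd A.
  have -> : A = 0 by apply/matrixP => i; case: i.
  have : N (0 *: (0 : 'M[R[i]]_0)) = cmod (0 : R[i]) * N 0 by case: NM.1.
  by rewrite scale0r cmod0 mul0r => ->; apply: opnorm_ge0.
exact: (N_le_op NM Nd A).
Qed.
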